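(* Let $n\ge 3$, let $q_1,q_2$ be powers of a prime $p$, let $q=q_1\otimes q_2=q_1^d$, let $a$ be the smallest prime divisor of $n$, and assume $d<n-(n/a)$. Let $R=A(n,q_1,q_2)$, let $S$ be the subring of block-diagonal elements $\begin{pmatrix} A & 0\\ 0 & b\end{pmatrix}$ ($A\in M_n(\mathbb{F}_{q_1})$, $b\in\mathbb{F}_{q_2}$), identified with $M_n(\mathbb{F}_{q_1})\oplus\mathbb{F}_{q_2}$, and let $J$ be the set of elements $\begin{pmatrix} 0 & v\\ 0 & 0\end{pmatrix}$ ($v\in M_{n\times1}(\mathbb{F}_q)$). For $x\in J$ let $C_S(x)=\{s\in S: sx=xs\}$. Let $\mathscr{C}$ be the set of subrings of $S$ consisting of (i) all subrings $T_U\oplus\mathbb{F}_{q_2}$, where $U$ ranges over the $d$-dimensional subspaces of $\mathbb{F}_{q_1}^n$ and $T_U=\{A\in M_n(\mathbb{F}_{q_1}): AU\subseteq U\}$; and (ii) all subrings $M_n(\mathbb{F}_{q_1})\oplus\mathbb{F}_r$, where $\mathbb{F}_r$ ranges over the maximal subfields of $\mathbb{F}_{q_2}$ that contain $\mathbb{F}_{q_1}\cap\mathbb{F}_{q_2}$. Then $\bigcup_{x\in J\setminus\{0\}}C_S(x)\subseteq\bigcup_{M\in\mathscr{C}}M$, and $|\mathscr{C}|=\binom{n}{d}_{q_1}+\omega(d)$.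
   Context: For powers $q_1=p^{d_1}$, $q_2=p^{d_2}$ of a prime $p$, $q_1\otimes q_2:=p^{\operatorname{lcm}(d_1,d_2)}$; $\mathbb{F}_{q_1},\mathbb{F}_{q_2}$ are subfields of $\mathbb{F}_q$. $A(n,q_1,q_2)$ is the subring of $M_{n+1}(\mathbb{F}_q)$ of all block matrices $\begin{pmatrix} A & v\\ 0 & b\end{pmatrix}$ with $A\in M_n(\mathbb{F}_{q_1})$, $v\in M_{n\times 1}(\mathbb{F}_q)$, $b\in\mathbb{F}_{q_2}$. $\omega(m)$ is the number of distinct prime divisors of $m$ ($\omega(1)=0$), and $\binom{n}{k}_q$ is the $q$-binomial coefficient (number of $k$-dimensional subspaces of $\mathbb{F}_q^n$). *)

(* Defs.v *)
From HB Require Import structures.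
From mathcomp Require Import all_boot all_algebra.
From Stdlib Require Import ClassicalEpsilon.
Set Implicit Arguments. Unset Strict Implicit. Unset Printing Implicit Defensive.
Import GRing.Theory.
Local Open Scope ring_scope.

Definition pb (P : Prop) : bool :=
  if excluded_middle_informative P then true else false.

Lemma pbP (P : Prop) : reflect P (pb P).
Proof. by rewrite /pb; case: excluded_middle_informative => h; constructor. Qed.

Fixpoint qbinom (q n k : nat) : nat :=
  match n, k with
  | _, 0 => 1
  | 0, _.+1 => 0
  | n'.+1, k'.+1 => (qbinom q n' k' + q ^ k'.+1 * qbinom q n' k'.+1)%N
  end.

Definition omega (m : nat) : nat := size (primes m).

(* The ring S = M_n(F_q1) (+) F_q2 is represented by pairs (A, b);
   F_q1, F_q2 are embedded in F_q by the field morphisms i1, i2. *)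
Section Defs.
Variables (F1 F2 F : finFieldType) (i1 : {rmorphism F1 -> F})
  (i2 : {rmorphism F2 -> F}) (n : nat).

Definition Sembed (s : 'M[F1]_n * F2) : 'M[F]_(n + 1) :=
  block_mx (map_mx i1 s.1) 0 0 (i2 s.2)%:M.

Definition Jembed (v : 'cV[F]_n) : 'M[F]_(n + 1) := block_mx 0 v 0 0.

Definition CS (v : 'cV[F]_n) : {set 'M[F1]_n * F2} :=
  [set s | Sembed s *m Jembed v == Jembed v *m Sembed s].

Definition TU (U : {vspace 'cV[F1]_n}) : {set 'M[F1]_n * F2} :=
  [set s | [forall u : 'cV[F1]_n, (u \in U) ==> (s.1 *m u \in U)]].

Definition is_subfield (K : {set F2}) : bool :=
  [&& 1 \in K,
      [forall x in K, forall y in K, (x - y \in K) && (x * y \in K)] &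
      [forall x in K, (x != 0) ==> (x^-1 \in K)]].

Definition maximal_subfield (K : {set F2}) : bool :=
  [&& is_subfield K, K != setT &
      [forall K' : {set F2}, (is_subfield K' && (K \proper K')) ==> (K' == setT)]].

(* K contains F_q1 \cap F_q2 (intersection taken inside F_q) *)
Definition contains_int (K : {set F2}) : bool :=
  [forall y : F2, [exists x : F1, i1 x == i2 y] ==> (y \in K)].

Definition MK (K : {set F2}) : {set 'M[F1]_n * F2} := [set s | s.2 \in K].

Definition inC (d : nat) (M : {set 'M[F1]_n * F2}) : Prop :=
  (exists U : {vspace 'cV[F1]_n}, \dim U = d /\ M = TU U) \/
  (exists K : {set F2}, [&& maximal_subfield K & contains_int K] /\ M = MK K).

Definition Cset (d : nat) : {set {set 'M[F1]_n * F2}} := [set M | pb (inC d M)].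

End Defs.

(* Main.v *)
Require Import Defs.
From HB Require Import structures.
From mathcomp Require Import all_boot all_algebra all_fingroup all_solvable all_field zify.
Set Implicit Arguments. Unset Strict Implicit. Unset Printing Implicit Defensive.
Import GRing.Theory FinRing.Theory.

Section QB.
Variable q : nat.
Hypothesis q0 : (0 < q)%N.

Definition Qp n k := (\prod_(i < k) (q ^ (n - i) - 1))%N.

Lemma Qp_rec_l n k : Qp n.+1 k.+1 = ((q ^ n.+1 - 1) * Qp n k)%N.
Proof. by rewrite /Qp big_ord_recl subn0; congr (_ * _)%N; apply: eq_bigr => i _. Qed.

Lemma Qp_rec_r n k : Qp n k.+1 = (Qp n k * (q ^ (n - k) - 1))%N.
Proof. by rewrite /Qp big_ord_recr. Qed.

Lemma Qp_zero n k : (n < k)%N -> Qp n k = 0%N.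
Proof.
move=> lt; rewrite /Qp (bigD1 (Ordinal lt)) //= subnn expn0 subnn. by rewrite mul0n.
Qed.

Lemma qbinom_Qp n k : (qbinom q n k * Qp k k = Qp n k)%N.
Proof.
elim: n k => [|n IH] [|k] //=; first by rewrite !/Qp !big_ord0.
- by rewrite mul0n Qp_zero.
- by rewrite !/Qp !big_ord0.
rewrite mulnDl -(mulnA (q ^ k.+1)) IH !Qp_rec_l mulnCA IH Qp_rec_r.
have [le|lt] := leqP k n; last by rewrite Qp_zero // !(muln0, mul0n).
have e : (q ^ k.+1 * q ^ (n - k) = q ^ n.+1)%N by rewrite -expnD; congr (q ^ _)%N; lia.
have a1 : (0 < q ^ k.+1)%N by rewrite expn_gt0 q0.
have b1 : (0 < q ^ (n - k))%N by rewrite expn_gt0 q0.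
move: e a1 b1; set a := (q ^ k.+1)%N; set b := (q ^ (n - k))%N; set c := (q ^ n.+1)%N.
set Q := Qp n k => e a1 b1.
rewrite (mulnC Q) mulnA -mulnDl; congr (_ * _)%N.
rewrite -e; nia.
Qed.

Lemma expB_split n i : (q ^ n - q ^ i = q ^ i * (q ^ (n - i) - 1))%N.
Proof.
have [le|lt] := leqP i n.
  by rewrite mulnBr muln1 -expnD subnKC.
have : (q ^ n <= q ^ i)%N by rewrite leq_pexp2l // ltnW.
rewrite (_ : n - i = 0)%N ?expn0 ?subnn ?muln0; last lia.
by move=> h; apply/eqP; rewrite subn_eq0.
Qed.

Lemma qbinom_prod n k :
  (qbinom q n k * \prod_(i < k) (q ^ k - q ^ i) = \prod_(i < k) (q ^ n - q ^ i))%N.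
Proof.
rewrite (eq_bigr (fun i : 'I_k => q ^ i * (q ^ (k - i) - 1)))%N; last by move=> i _; apply: expB_split.
rewrite [RHS](eq_bigr (fun i : 'I_k => q ^ i * (q ^ (n - i) - 1)))%N; last by move=> i _; apply: expB_split.
rewrite !big_split /= mulnCA -/(Qp k k) -/(Qp n k) -(qbinom_Qp n k).
by [].
Qed.
End QB.

Local Open Scope ring_scope.


Section SubField.
Variable L : finFieldType.
Implicit Types K : {set L}.

Lemma sfP K : is_subfield K ->
  [/\ 1 \in K, {in K &, forall x y, x - y \in K}, {in K &, forall x y, x * y \in K}
    & {in K, forall x, x^-1 \in K}].
Proof.
case/and3P=> K1 /forallP KBM /forallP KV; split=> //.
- by move=> x y xK yK; have /forall_inP/(_ y yK)/andP[] := implyP (KBM x) xK.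
- by move=> x y xK yK; have /forall_inP/(_ y yK)/andP[] := implyP (KBM x) xK.
move=> x xK; have [->|nz] := eqVneq x 0; first by rewrite invr0 -(subrr 1); 
  have /forall_inP/(_ 1 K1)/andP[] := implyP (KBM 1) K1.
by have := implyP (KV x) xK; rewrite nz.
Qed.

Section S.
Variables (K : {set L}) (sK : is_subfield K).
Lemma sf1 : 1 \in K. Proof. by case: (sfP sK). Qed.
Lemma sfB x y : x \in K -> y \in K -> x - y \in K. Proof. by case: (sfP sK) => _ h _ _; apply: h. Qed.
Lemma sfM x y : x \in K -> y \in K -> x * y \in K. Proof. by case: (sfP sK) => _ _ h _; apply: h. Qed.
Lemma sfV x : x \in K -> x^-1 \in K. Proof. by case: (sfP sK) => _ _ _ h; apply: h. Qed.
Lemma sf0 : 0 \in K. Proof. by rewrite -(subrr 1) sfB ?sf1. Qed.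
Lemma sfN x : x \in K -> - x \in K. Proof. by move=> xK; rewrite -sub0r sfB ?sf0. Qed.
Lemma sfD x y : x \in K -> y \in K -> x + y \in K.
Proof. by move=> xK yK; rewrite -[y]opprK sfB ?sfN. Qed.
Lemma sfX x k : x \in K -> x ^+ k \in K.
Proof. by move=> xK; elim: k => [|k IH]; rewrite ?expr0 ?sf1 // exprS sfM. Qed.

Lemma sf_group : group_set K.
Proof.
apply/group_setP; split; first exact: sf0.
by move=> x y xK yK; rewrite zmodMgE sfD.
Qed.

Lemma sf_card_dvd : (#|K| %| #|L|)%N.
Proof.
rewrite -cardsT; have := cardSg (subsetT (Group sf_group)); by [].
Qed.

Definition unitsK := [set u : {unit L} | val u \in K].
Lemma unitsK_group : group_set unitsK.
Proof.
apply/group_setP; split; first by rewrite inE val_unit1 sf1.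
by move=> x y; rewrite !inE val_unitM; apply: sfM.
Qed.

Lemma card_unitsK : #|unitsK| = #|K|.-1.
Proof.
rewrite (cardsD1 0 K) sf0 add1n /=.
rewrite -(card_imset _ val_inj); apply: eq_card => x.
rewrite !inE; apply/imsetP/andP => [[u]|[nz xK]].
  by rewrite inE => uK ->; split=> //; rewrite -unitfE (valP u).
by exists (finField_unit nz); rewrite ?inE.
Qed.

Lemma sf_exp x : x \in K -> x ^+ #|K| = x.
Proof.
move=> xK; have cK : (0 < #|K|)%N by apply/card_gt0P; exists 0; apply: sf0.
have [->|nz] := eqVneq x 0; first by rewrite expr0n eqn0Ngt cK.
rewrite -(prednK cK) exprS; suff -> : x ^+ #|K|.-1 = 1 by rewrite mulr1.
have uK : finField_unit nz \in unitsK by rewrite inE.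
have := order_dvdG (G := Group unitsK_group) uK.
rewrite -card_unitsK /= order_dvdn => /eqP/(congr1 val).
by rewrite val_unitX.
Qed.
End S.
End SubField.


Lemma expm1_dvd (p a b : nat) : (1 < p)%N -> ((p ^ a).-1 %| (p ^ b).-1)%N -> (a %| b)%N.
Proof.
move=> p1; elim/ltn_ind: b => b IH h.
have [ltba|leab] := ltnP b a.
  have pb : (0 < p ^ b)%N by rewrite expn_gt0; lia.
  have hl : ((p ^ b).-1 < (p ^ a).-1)%N.
    have := ltn_exp2l b a p1; rewrite ltba => H; lia.
  have [z|pos] := posnP (p ^ b).-1.
    have /eqP : (p ^ b = 1)%N by lia.
    by rewrite -(expn0 p) eqn_exp2l // => /eqP ->; rewrite dvdn0.
  by have := dvdn_leq pos h; lia.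
have [a0|a0] := posnP a.
  move: h; rewrite a0 expn0 /= dvd0n => /eqP h0.
  have pb : (0 < p ^ b)%N by rewrite expn_gt0; lia.
  have /eqP : (p ^ b = 1)%N by lia.
  by rewrite -(expn0 p) eqn_exp2l // => /eqP ->.
have e : (p ^ b).-1 = (p ^ (b - a) * (p ^ a).-1 + (p ^ (b - a)).-1)%N.
  rewrite -{1}(subnK leab) expnD.
  have : (0 < p ^ (b - a))%N by rewrite expn_gt0; lia.
  have : (0 < p ^ a)%N by rewrite expn_gt0; lia.
  nia.
move: h; rewrite e dvdn_addr ?dvdn_mull // => h'.
have := IH (b - a)%N ltac:(lia) h'.
have {2}-> : b = addn (b - a) a by lia.
by move=> H; rewrite dvdn_addr.
Qed.

Lemma expm1_dvdW (y k : nat) : ((y.-1) %| (y ^ k).-1)%N.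
Proof.
case: y => [|y]; first by case: k => [|k]; rewrite ?expn0 ?exp0n.
elim: k => [|k IH] /=; first by rewrite dvdn0.
have e : ((y.+1 ^ k.+1).-1 = y.+1 ^ k * y + (y.+1 ^ k).-1)%N.
  rewrite expnS. have : (0 < y.+1 ^ k)%N by rewrite expn_gt0. nia.
by rewrite e dvdn_add // dvdn_mull.
Qed.


Section SF2.
Variable L : finFieldType.
Variables (p m : nat) (hp : prime p) (cL : #|L| = (p ^ m)%N).
Implicit Types K : {set L}.

Lemma is_subfieldT : is_subfield [set: L].
Proof.
apply/and3P; split; first by rewrite inE.
  by apply/forall_inP => x _; apply/forall_inP => y _; rewrite !inE.
by apply/forall_inP => x _; rewrite inE implybT.
Qed.

Lemma roots_card c : (1 < c)%N -> (#|[set x : L | x ^+ c == x]| <= c)%N.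
Proof.
move=> c1; set A := [set x | _].
have nz : ('X^c - 'X : {poly L}) != 0.
  by rewrite -size_poly_gt0 size_polyDl ?size_polyXn ?size_polyN ?size_polyX.
have := max_poly_roots nz (rs := enum A).
rewrite size_polyDl ?size_polyXn ?size_polyN ?size_polyX // -cardE ltnS; apply.
  by apply/allP => x; rewrite mem_enum inE rootE !hornerE => /eqP ->; rewrite subrr.
exact: enum_uniq.
Qed.

Lemma sf_card_gt1 K : is_subfield K -> (1 < #|K|)%N.
Proof.
move=> sK; rewrite (cardsD1 0) sf0 // add1n ltnS card_gt0.
by apply/set0Pn; exists 1; rewrite !inE oner_neq0 sf1.
Qed.

Lemma sf_eq K : is_subfield K -> K = [set x | x ^+ #|K| == x].
Proof.
move=> sK; apply/eqP; rewrite eqEcard roots_card ?sf_card_gt1 // andbT.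
by apply/subsetP => x xK; rewrite inE sf_exp.
Qed.

Lemma sf_card_uniq K (K' : {set L}) : is_subfield K -> is_subfield K' -> #|K| = #|K'| -> K = K'.
Proof. by move=> sK sK' e; rewrite (sf_eq sK) (sf_eq sK') e. Qed.

Lemma sf_cardE K : is_subfield K -> #|K| = (p ^ logn p #|K|)%N.
Proof.
move=> sK; have := sf_card_dvd sK; rewrite cL => /(dvdn_pfactor _ _ hp)[e _ ->].
by rewrite pfactorK.
Qed.

Lemma sf_sub_dvd K (K' : {set L}) : is_subfield K -> is_subfield K' -> K \subset K' ->
  (logn p #|K| %| logn p #|K'|)%N.
Proof.
move=> sK sK' sub; apply: (@expm1_dvd p); first exact: prime_gt1.
rewrite -!sf_cardE // -!card_unitsK //.
have sub' : unitsK K \subset unitsK K'.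
  by apply/subsetP => u; rewrite !inE => /(subsetP sub).
exact: (cardSg (G := Group (unitsK_group sK')) (H := Group (unitsK_group sK)) sub').
Qed.

Lemma sf_dvd_m K : is_subfield K -> (logn p #|K| %| m)%N.
Proof.
move=> sK; have := sf_sub_dvd sK is_subfieldT (subsetT K).
by rewrite cardsT cL pfactorK.
Qed.

Lemma pow_iter (x : L) c k : x ^+ c = x -> x ^+ (c ^ k) = x.
Proof.
move=> h; elim: k => [|k IH]; first by rewrite expn0 expr1.
by rewrite expnSr exprM IH h.
Qed.

Lemma sf_dvd_sub K (K' : {set L}) : is_subfield K -> is_subfield K' ->
  (logn p #|K| %| logn p #|K'|)%N -> K \subset K'.
Proof.
move=> sK sK' /dvdnP[k ek]; rewrite [K](sf_eq sK) [K'](sf_eq sK').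
apply/subsetP => x; rewrite !inE => /eqP h; apply/eqP.
rewrite (sf_cardE sK') ek mulnC expnM; apply: pow_iter.
by rewrite -sf_cardE.
Qed.

Lemma pcharL : p \in [pchar L].
Proof. exact: card_finPcharP cL hp. Qed.

Lemma frobB e (x y : L) : (x - y) ^+ (p ^ e) = x ^+ (p ^ e) - y ^+ (p ^ e).
Proof.
elim: e => [|e IH]; first by rewrite !expn0 !expr1.
rewrite expnSr !exprM IH.
have h := pFrobenius_autB_comm pcharL (mulrC (x ^+ (p ^ e)) (y ^+ (p ^ e))).
by rewrite !pFrobenius_autE in h.
Qed.

Definition Kfix e := [set x : L | x ^+ (p ^ e) == x].

Lemma Kfix_sf e : is_subfield (Kfix e).
Proof.
apply/and3P; split; first by rewrite inE expr1n.
  apply/forall_inP => x; rewrite inE => /eqP hx; apply/forall_inP => y.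
  by rewrite inE => /eqP hy; rewrite !inE frobB exprMn hx hy !eqxx.
by apply/forall_inP => x; rewrite !inE => /eqP hx; rewrite exprVn hx eqxx implybT.
Qed.
End SF2.

Section KC.
Variable L : finFieldType.
Variables (p m : nat) (hp : prime p) (cL : #|L| = (p ^ m)%N).

Lemma Kfix_card e : (0 < e)%N -> (e %| m)%N -> #|Kfix L p e| = (p ^ e)%N.
Proof.
move=> e0 /dvdnP[kk ek].
have p1 := prime_gt1 hp.
have pe1 : (1 < p ^ e)%N by have := ltn_exp2l 0 e p1; rewrite e0 expn0.
apply/eqP; rewrite eqn_leq roots_card //=.
set N := #|L|.-1; set M := (p ^ e).-1.
have MN : (M %| N)%N by rewrite /N cL ek mulnC expnM expm1_dvdW.
have M0 : (0 < M)%N by rewrite /M; lia.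
have [z Gz] : exists z : {unit L}, [set: {unit L}] = <[z]>%g.
  by apply/cyclicP; exact: (field_unit_group_cyclic [set: {unit L}]%G).
have oz : #[z]%g = N by rewrite orderE -Gz card_finField_unit.
set k := (N %/ M)%N.
have kM : (k * M = N)%N by rewrite divnK.
have N0 : (0 < N)%N by rewrite -oz order_gt0.
have k0 : (0 < k)%N by move: kM N0; case: (k) => //; rewrite mul0n => <-.
pose f (j : 'I_M) : L := val (z ^+ (k * j))%g.
have finj : injective f.
  move=> i j /val_inj /eqP; rewrite eq_expg_mod_order oz !modn_small.
  - by rewrite eqn_pmul2l // => /eqP /val_inj.
  - by rewrite -kM ltn_pmul2l.
  - by rewrite -kM ltn_pmul2l.
have sub : [set f j | j in 'I_M] \subset Kfix L p e :\ 0.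
  apply/subsetP => x /imsetP[j _ ->]; rewrite !inE.
  have nz : f j != 0 by rewrite -unitfE (valP (z ^+ (k * j))%g).
  rewrite nz /=.
  rewrite -(prednK (ltnW pe1)) exprS -/M /f -val_unitX -expgM mulnAC kM -oz.
  by rewrite mulnC expgM expg_order expg1n val_unit1 mulr1.
rewrite (cardsD1 0) (_ : 0 \in _); last by rewrite inE expr0n; case: (p ^ e)%N pe1.
have := subset_leq_card sub; rewrite card_imset // card_ord.
by rewrite add1n /M -{2}(prednK (ltnW pe1)) ltnS.
Qed.
End KC.


Section FreeCount.
Variables (F : finFieldType) (n : nat).
Local Notation vT := 'cV[F]_n.

Lemma card_span_compl (U : {vspace vT}) (X : seq vT) : free X -> all (fun x => x \in U) X ->
  #|[set x : vT | (x \in U) && (x \notin <<X>>%VS)]| = (#|F| ^ \dim U - #|F| ^ size X)%N.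
Proof.
move=> fX aX.
have sub : (<<X>> <= U)%VS by apply/span_subvP => x xX; apply: (allP aX).
have -> : [set x : vT | (x \in U) && (x \notin <<X>>%VS)] =
   [set x | x \in U] :\: [set x | x \in <<X>>%VS].
  by apply/setP => x; rewrite !inE andbC.
rewrite cardsD.
have -> : [set x : vT | x \in U] :&: [set x | x \in <<X>>%VS] = [set x | x \in <<X>>%VS].
  by apply/setP => x; rewrite !inE andb_idl // => /(subvP sub).
by rewrite !cardsE !card_vspace (eqP fX).
Qed.
Lemma card_free_in (U : {vspace vT}) k :
  #|[set X : k.-tuple vT | free X && all (fun x => x \in U) X]| =
  (\prod_(i < k) (#|F| ^ \dim U - #|F| ^ i))%N.
Proof.
elim: k => [|k IH].
  rewrite big_ord0 (_ : [set X | _] = setT) ?cardsT ?card_tuple ?expn0 //.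
  by apply/setP => X; rewrite !inE tuple0 /= nil_free.
rewrite big_ord_recr /= -IH -[in LHS]sum1_card.
rewrite (reindex (fun u : k.-tuple vT * vT => [tuple of u.2 :: u.1])) /=; last first.
  exists (fun t : k.+1.-tuple vT => ([tuple of behead t], thead t)) => [[X x] _|t _] /=.
    by congr (_, _); apply: val_inj.
  by rewrite [RHS]tuple_eta.
rewrite (eq_bigl (fun u : k.-tuple vT * vT =>
   (u.1 \in [set X : k.-tuple vT | free X && all (fun x => x \in U) X]) &&
   (u.2 \in [set x : vT | (x \in U) && (x \notin <<u.1>>%VS)]))); last first.
  move=> [X x]; rewrite !inE /= free_cons.
  by case: (x \notin _); case: (free X); case: (x \in U); case: (all _ X).
rewrite -(pair_big_dep (fun X : k.-tuple vT => X \in [set X : k.-tuple vT | free X && all (fun x => x \in U) X])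
  (fun X x => x \in [set x : vT | (x \in U) && (x \notin <<X>>%VS)]) (fun _ _ => 1%N)) /=.
rewrite -[in RHS]sum1_card big_distrl /=; apply: eq_bigr => X.
rewrite inE => /andP[fX aX]; rewrite sum1_card card_span_compl // size_tuple.
by rewrite mul1n.
Qed.

End FreeCount.


Section TUc.
Variables (F1 F2 : finFieldType) (n : nat).
Local Notation vT := 'cV[F1]_n.

Lemma dual_exists (w : vT) : w != 0 -> exists f : 'rV[F1]_n, f *m w = 1.
Proof.
move=> nz; have [i wi] : exists i, w i 0 != 0.
  apply/existsP; move: nz; apply: contraR; rewrite negb_exists => /forallP h.
  by apply/eqP/matrixP => i j; rewrite (ord1 j) mxE; apply/eqP/negbNE/h.
exists ((w i 0)^-1 *: delta_mx 0 i); rewrite -scalemxAl.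
apply/matrixP => a b; rewrite (ord1 a) (ord1 b) !mxE.
rewrite (bigD1 i) //= big1 ?addr0; last by move=> j ji; rewrite mxE eqxx /= (negbTE ji) mul0r.
by rewrite mxE !eqxx mul1r mulVf.
Qed.

Lemma rank1_in (U : {vspace vT}) (u : vT) (f : 'rV[F1]_n) x : u \in U -> (u *m f) *m x \in U.
Proof.
move=> uU; rewrite -mulmxA [f *m x]mx11_scalar mul_mx_scalar.
exact: memvZ.
Qed.

Lemma TU_sub (U U' : {vspace vT}) : U' != 0%VS -> TU F2 U = TU F2 U' -> (U <= U')%VS.
Proof.
move=> nz e; apply/subvP => u uU; apply/negPn/negP => uU'.
have [w wU' w0] : exists2 w, w \in U' & w != 0.
  by exists (vpick U'); rewrite ?memv_pick ?vpick0.
have [f fw] := dual_exists w0.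
have : (u *m f, 0 : F2) \in TU F2 U.
  by rewrite inE; apply/forallP => x; apply/implyP => _; apply: rank1_in.
rewrite e inE => /forallP/(_ w); rewrite wU' /= -mulmxA fw mulmx1.
by rewrite (negbTE uU').
Qed.

Lemma TU_inj (U U' : {vspace vT}) : \dim U = \dim U' -> (0 < \dim U)%N ->
  TU F2 U = TU F2 U' -> U = U'.
Proof.
move=> de d0 e.
have nz : forall V : {vspace vT}, (0 < \dim V)%N -> V != 0%VS.
  by move=> V; apply: contraTneq => ->; rewrite dimv0.
have s1 := TU_sub (nz _ (leq_trans d0 (eq_leq de))) e.
by apply/eqP; rewrite eqEdim s1 /= de.
Qed.
Lemma dim_free_span k (X : k.-tuple vT) : free X -> \dim <<X>> = k.
Proof. by move/eqP ->; rewrite size_tuple. Qed.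

Lemma card_TUpart d : (0 < d)%N ->
  #|[set M : {set 'M[F1]_n * F2} |
      pb (exists U : {vspace vT}, \dim U = d /\ M = TU F2 U)]| = qbinom #|F1| n d.
Proof.
move=> d0.
set FT := [set X : d.-tuple vT | free X].
pose phi (X : d.-tuple vT) := TU F2 <<X>>%VS.
have -> : [set M : {set 'M[F1]_n * F2} |
      pb (exists U : {vspace vT}, \dim U = d /\ M = TU F2 U)] = phi @: FT.
  apply/setP => M; rewrite inE; apply/pbP/imsetP => [[U [dU ->]]|[X]].
    have sz : size (vbasis U) == d by rewrite size_tuple dU.
    exists (Tuple sz); first by rewrite inE /=; case/andP: (vbasisP U).
    by rewrite /phi /=; case/andP: (vbasisP U) => /eqP ->.
  by rewrite inE => fX ->; exists <<X>>%VS; split => //; apply: dim_free_span.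
have q1 : (1 < #|F1|)%N := finNzRing_gt1 F1.
set G := (\prod_(i < d) (#|F1| ^ d - #|F1| ^ i))%N.
have G0 : (0 < G)%N.
  rewrite prodn_gt0 // => i; rewrite subn_gt0 ltn_exp2l //.
have cFT : #|FT| = (\prod_(i < d) (#|F1| ^ n - #|F1| ^ i))%N.
  have := card_free_in (fullv : {vspace vT}) d; rewrite dimvf.
  have -> : dim vT = n by rewrite dim_matrix; exact: muln1.
  move=> <-.
  apply: eq_card => X; rewrite !inE; case: (free X) => //=.
  by symmetry; apply/allP => x _; apply: memvf.
have key : #|FT| = (#|phi @: FT| * G)%N.
  rewrite -sum1_card (partition_big_imset phi) /= -sum_nat_const.
  apply: eq_bigr => M /imsetP[X0 X0F ->].
  have fX0 : free X0 by rewrite inE in X0F.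
  rewrite sum1_card /G; have := card_free_in <<X0>>%VS d; rewrite dim_free_span // => <-.
  apply: eq_card => X; rewrite unfold_in /= !inE; apply/andP/andP => [[fX /eqP e]|[fX aX]].
    split => //; apply/allP => x xX.
    rewrite -(TU_inj _ _ e) ?memv_span // !dim_free_span //.
  split => //; apply/eqP; congr (TU F2 _).
  apply/eqP; rewrite eqEdim !dim_free_span // leqnn andbT.
  by apply/span_subvP => x xX; apply: (allP aX).
apply/eqP; rewrite -(eqn_pmul2r G0) -key cFT qbinom_prod //.
by apply: ltnW.
Qed.

End TUc.


Lemma full_card (T : finType) (K : {set T}) : #|K| = #|T| -> K = setT.
Proof. by move=> h; apply/eqP; rewrite eqEcard subsetT /= cardsT h. Qed.

Lemma sf_img (A B : finFieldType) (f : {rmorphism A -> B}) (K : {set A}) :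
  is_subfield K -> is_subfield (f @: K).
Proof.
move=> sK; apply/and3P; split.
- by apply/imsetP; exists 1; rewrite ?rmorph1 ?sf1.
- apply/forall_inP => x /imsetP[a aK ->]; apply/forall_inP => y /imsetP[b bK ->].
  by rewrite -rmorphB -rmorphM !imset_f ?sfB ?sfM.
- by apply/forall_inP => x /imsetP[a aK ->]; rewrite -fmorphV imset_f ?sfV ?implybT.
Qed.

Lemma sf_preim (A B : finFieldType) (f : {rmorphism A -> B}) (K : {set B}) :
  is_subfield K -> is_subfield (f @^-1: K).
Proof.
move=> sK; apply/and3P; split.
- by rewrite inE rmorph1 sf1.
- apply/forall_inP => x; rewrite inE => xK; apply/forall_inP => y; rewrite inE => yK.
  by rewrite !inE rmorphB rmorphM sfB ?sfM.
- by apply/forall_inP => x; rewrite !inE fmorphV => xK; rewrite sfV ?implybT.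
Qed.

Lemma sf_cap (A : finFieldType) (K K' : {set A}) :
  is_subfield K -> is_subfield K' -> is_subfield (K :&: K').
Proof.
move=> sK sK'; apply/and3P; split.
- by rewrite inE !sf1.
- apply/forall_inP => x; rewrite inE => /andP[xK xK']; apply/forall_inP => y.
  by rewrite inE => /andP[yK yK']; rewrite !inE !sfB ?sfM.
- by apply/forall_inP => x; rewrite !inE => /andP[xK xK']; rewrite !sfV ?implybT.
Qed.

Lemma card_img (A B : finFieldType) (f : {rmorphism A -> B}) (K : {set A}) :
  #|f @: K| = #|K|.
Proof. by rewrite card_imset //; apply: fmorph_inj. Qed.

Section Setting.
Variables (p d1 d2 d : nat) (F1 F2 F : finFieldType)
  (i1 : {rmorphism F1 -> F}) (i2 : {rmorphism F2 -> F}).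
Hypotheses (hp : prime p) (c1 : #|F1| = (p ^ d1)%N) (c2 : #|F2| = (p ^ d2)%N)
  (cF : #|F| = (p ^ lcmn d1 d2)%N) (cd : #|F| = (#|F1| ^ d)%N).

Let p1 := prime_gt1 hp.

Lemma d1_gt0 : (0 < d1)%N.
Proof. have := finNzRing_gt1 F1; rewrite c1; case: d1 => //; rewrite expn0. Qed.
Lemma d2_gt0 : (0 < d2)%N.
Proof. have := finNzRing_gt1 F2; rewrite c2; case: d2 => //; rewrite expn0. Qed.

Definition g := gcdn d1 d2.

Lemma d2E : d2 = (d * g)%N.
Proof.
have /eqP : (p ^ lcmn d1 d2 = p ^ (d1 * d))%N by rewrite -cF cd c1 expnM.
rewrite eqn_exp2l // => /eqP e.
have := muln_lcm_gcd d1 d2; rewrite e -mulnA => /eqP.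
by rewrite eqn_pmul2l ?d1_gt0 // => /eqP.
Qed.

Lemma g_gt0 : (0 < g)%N. Proof. by rewrite gcdn_gt0 d1_gt0. Qed.
Lemma d_gt0 : (0 < d)%N.
Proof. by have := d2_gt0; rewrite d2E muln_gt0 => /andP[]. Qed.

Definition K0 := [set y : F2 | [exists x : F1, i1 x == i2 y]].

Lemma contains_intE K : contains_int i1 i2 K = (K0 \subset K).
Proof.
apply/forallP/subsetP => [h y|h y]; first by rewrite inE => /(implyP (h y)).
by apply/implyP => e; apply: h; rewrite inE.
Qed.

Let I1 := i1 @: [set: F1].
Let I2 := i2 @: [set: F2].

Lemma K0_img : i2 @: K0 = I1 :&: I2.
Proof.
apply/setP => z; apply/imsetP/setIP => [[y] |[/imsetP[x _ ->] /imsetP[y _ e]]].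
  by rewrite inE => /existsP[x /eqP e] ->; split; apply/imsetP; [exists x | exists y].
by exists y => //; rewrite inE; apply/existsP; exists x; rewrite e.
Qed.

Lemma sfK0 : is_subfield K0.
Proof.
have -> : K0 = i2 @^-1: I1.
  apply/setP => y; rewrite !inE; apply/existsP/imsetP => [[x /eqP e]|[x _ e]].
    by exists x.
  by exists x; rewrite e.
apply: sf_preim; apply: sf_img; exact: is_subfieldT.
Qed.

Lemma card_K0 : #|K0| = (p ^ g)%N.
Proof.
rewrite -(card_img i2) K0_img.
have sI1 : is_subfield I1 by apply: sf_img; apply: is_subfieldT.
have sI2 : is_subfield I2 by apply: sf_img; apply: is_subfieldT.
have sI := sf_cap sI1 sI2.
have eI1 : logn p #|I1| = d1 by rewrite card_img cardsT c1 pfactorK.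
have eI2 : logn p #|I2| = d2 by rewrite card_img cardsT c2 pfactorK.
rewrite (sf_cardE hp cF sI); congr (p ^ _)%N.
apply/eqP; rewrite eqn_dvd; apply/andP; split.
  rewrite dvdn_gcd -{1}eI1 -eI2.
  by rewrite !(sf_sub_dvd hp cF) // ?subsetIl ?subsetIr.
have gl : (g %| lcmn d1 d2)%N by apply: dvdn_trans (dvdn_gcdl _ _) (dvdn_lcml _ _).
have sG := Kfix_sf hp cF g.
have cG := Kfix_card hp cF g_gt0 gl.
have eG : logn p #|Kfix F p g| = g by rewrite cG pfactorK.
rewrite -{1}eG (sf_sub_dvd hp cF) //.
rewrite subsetI !(sf_dvd_sub hp cF) // eG ?eI1 ?eI2 ?dvdn_gcdl ?dvdn_gcdr //.
Qed.

Definition Kf (l : nat) := Kfix F2 p (d2 %/ l).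
Definition esf (K : {set F2}) := logn p #|K|.

Lemma below (S : {set F2}) : is_subfield S -> K0 \subset S -> S != setT ->
  exists2 l, l \in primes d & S \subset Kf l.
Proof.
move=> sS K0S nT.
have eS := sf_cardE hp c2 sS.
have eSd2 := sf_dvd_m hp c2 sS.
have gS : (g %| esf S)%N.
  by have := sf_sub_dvd hp c2 sfK0 sS K0S; rewrite card_K0 pfactorK.
set e := esf S in gS.
have [t dt] : exists t, d2 = (e * t)%N by case/dvdnP: eSd2 => t ->; exists t; rewrite mulnC.
have e0 : (0 < e)%N by move: (d2_gt0); rewrite dt muln_gt0 => /andP[].
have t1 : (1 < t)%N.
  case: t dt => [|[|t]] dt //; first by move: (d2_gt0); rewrite dt muln0.
  case/negP: nT; apply/eqP/full_card; rewrite eS c2 /esf dt muln1 //.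
set l := pdiv t.
have lp : prime l by apply: pdiv_prime.
have lt : (l %| t)%N by apply: pdiv_dvd.
have [e' ee'] : exists e', e = (g * e')%N by case/dvdnP: gS => e' ->; exists e'; rewrite mulnC.
have dE : d = (e' * t)%N.
  have := d2E; rewrite dt ee' => h; have := g_gt0.
  move=> g0; apply/eqP; rewrite -(eqn_pmul2r g0) -h; apply/eqP.
  by rewrite [in RHS]mulnC mulnA.
have ld : l \in primes d by rewrite mem_primes lp d_gt0 dE dvdn_mull.
exists l => //.
have d2l : (d2 %/ l = e * (t %/ l))%N by rewrite dt muln_divA.
have tl0 : (0 < t %/ l)%N by rewrite divn_gt0 ?prime_gt0 // dvdn_leq //; lia.
apply: (sf_dvd_sub hp c2 sS (Kfix_sf hp c2 _)).
have h1 : (0 < d2 %/ l)%N by rewrite d2l muln_gt0 e0.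
have h2 : (d2 %/ l %| d2)%N by rewrite {2}dt d2l dvdn_pmul2l // dvdn_div.
by rewrite (Kfix_card hp c2 h1 h2) pfactorK // d2l dvdn_mulr.
Qed.

Lemma Kf_facts l : l \in primes d ->
  [/\ is_subfield (Kf l), #|Kf l| = (p ^ (d2 %/ l))%N, Kf l != setT,
      K0 \subset Kf l & (d2 = (d2 %/ l) * l)%N].
Proof.
rewrite mem_primes => /and3P[lp _ ld].
have ld2 : (l %| d2)%N by rewrite d2E dvdn_mulr.
have d2l : d2 = (d2 %/ l * l)%N by rewrite divnK.
have l1 := prime_gt1 lp.
have h1 : (0 < d2 %/ l)%N by move: (d2_gt0); rewrite {1}d2l muln_gt0 => /andP[].
have h2 : (d2 %/ l %| d2)%N by rewrite dvdn_div.
have sK : is_subfield (Kf l) := Kfix_sf hp c2 (d2 %/ l).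
have cK : #|Kf l| = (p ^ (d2 %/ l))%N := Kfix_card hp c2 h1 h2.
split => //.
- apply/negP => /eqP e; move: cK; rewrite e cardsT c2 => /eqP; rewrite eqn_exp2l //.
  by move=> /eqP e'; move: (ltn_Pdiv l1 d2_gt0); rewrite -e' ltnn.
- apply: (sf_dvd_sub hp c2 sfK0 sK); rewrite card_K0 cK !pfactorK //.
  have -> : (d2 %/ l = (d %/ l) * g)%N by rewrite d2E divn_mulAC.
  exact: dvdn_mull.
Qed.

Lemma Kf_ms l : l \in primes d -> maximal_subfield (Kf l) && contains_int i1 i2 (Kf l).
Proof.
move=> lP; have [sK cK nT K0K d2l] := Kf_facts lP.
move: lP; rewrite mem_primes => /and3P[lp _ _].
rewrite contains_intE K0K andbT; apply/and3P; split => //.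
apply/forallP => K'; apply/implyP => /andP[sK' pr].
have sub := proper_sub pr.
have := sf_sub_dvd hp c2 sK sK' sub; rewrite cK pfactorK //.
case/dvdnP => s es.
have := sf_dvd_m hp c2 sK'; rewrite es {2}d2l mulnC dvdn_pmul2l; last first.
  by move: (d2_gt0); rewrite {1}d2l muln_gt0 => /andP[].
move=> sdl; case/primeP: lp => _ H; case/orP: (H s sdl) => [/eqP s1|/eqP sl].
  move: (proper_card pr); rewrite (sf_cardE hp c2 sK') es s1 mul1n -cK ltnn //.
apply/eqP/full_card; rewrite (sf_cardE hp c2 sK') es sl mulnC -d2l c2 //.
Qed.

Lemma ms_Kf K : maximal_subfield K -> contains_int i1 i2 K ->
  exists2 l, l \in primes d & K = Kf l.
Proof.
case/and3P => sK nT /forallP mx; rewrite contains_intE => K0K.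
have [l lP sub] := below sK K0K nT.
exists l => //; have [//|ne] := eqVneq K (Kf l).
have [sK' _ nT' _ _] := Kf_facts lP.
have := implyP (mx (Kf l)); rewrite sK' properEneq ne sub => /(_ isT) e.
by rewrite e in nT'.
Qed.

Lemma card_ms : #|[set K : {set F2} | maximal_subfield K && contains_int i1 i2 K]| = omega d.
Proof.
have inj : {in primes d &, injective Kf}.
  move=> l l' lP l'P e.
  have [_ cK _ _ dl] := Kf_facts lP; have [_ cK' _ _ dl'] := Kf_facts l'P.
  have /eqP := cK; rewrite e cK' eqn_exp2l // => /eqP ex.
  have x0 : (0 < d2 %/ l)%N by move: (d2_gt0); rewrite {1}dl muln_gt0 => /andP[].
  by apply/eqP; rewrite -(eqn_pmul2l x0) -dl -ex -dl'.
rewrite /omega -(size_map Kf) -(card_uniqP _); last by rewrite map_inj_in_uniq ?primes_uniq.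
apply: eq_card => K; rewrite inE; apply/idP/mapP => [/andP[ms ci]|[l lP ->]].
  by have [l lP ->] := ms_Kf ms ci; exists l.
exact: Kf_ms.
Qed.

Section Cover.
Variable n : nat.

Definition Rset (lam : F) := [set x : F | pb (exists Q : {poly F1}, x = (map_poly i1 Q).[lam])].

Lemma Rset_sf lam : is_subfield (Rset lam).
Proof.
have mem : forall Q : {poly F1}, (map_poly i1 Q).[lam] \in Rset lam.
  by move=> Q; rewrite inE; apply/pbP; exists Q.
have memP : forall x, x \in Rset lam -> exists Q : {poly F1}, x = (map_poly i1 Q).[lam].
  by move=> x; rewrite inE => /pbP.
have RM : forall x y, x \in Rset lam -> y \in Rset lam -> x * y \in Rset lam.
  move=> x y /memP[P ->] /memP[Q ->].
  by rewrite -hornerM -rmorphM mem.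
apply/and3P; split.
- by have := mem 1; rewrite rmorph1 hornerC.
- apply/forall_inP => x /memP[P ->]; apply/forall_inP => y /memP[Q ->].
  by rewrite RM ?mem // -hornerN -hornerD -rmorphN -rmorphD mem.
apply/forall_inP => x xR; apply/implyP => nz.
have xk : forall k, x ^+ k \in Rset lam.
  elim=> [|k IH]; first by have := mem 1; rewrite rmorph1 hornerC expr0.
  by rewrite exprS RM.
suff -> : x^-1 = x ^+ (#|F|.-2) by [].
have F1' : (1 < #|F|)%N := finNzRing_gt1 F.
have e1 : x ^+ (#|F|.-1) = 1.
  apply: (mulfI nz); rewrite -exprS prednK ?expf_card ?mulr1 //; lia.
apply: (mulfI nz); rewrite mulfV // -exprS -e1; congr (x ^+ _); lia.
Qed.

Lemma Rset_full b : ~ (exists2 K, maximal_subfield K && contains_int i1 i2 K & b \in K) ->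
  Rset (i2 b) = setT.
Proof.
move=> nb; set lam := i2 b.
have sR := Rset_sf lam.
have mem : forall Q : {poly F1}, (map_poly i1 Q).[lam] \in Rset lam.
  by move=> Q; rewrite inE; apply/pbP; exists Q.
have sS := sf_preim i2 sR.
have S2T : i2 @^-1: Rset lam = setT.
  apply/eqP; apply: contraT => nT.
  have K0S : K0 \subset i2 @^-1: Rset lam.
    apply/subsetP => y; rewrite inE => /existsP[x /eqP e]; rewrite inE -e.
    by have := mem x%:P; rewrite map_polyC hornerC.
  have [l lP sub] := below sS K0S nT.
  case: nb; exists (Kf l); first exact: Kf_ms.
  by apply: (subsetP sub); rewrite inE; have := mem 'X; rewrite map_polyX hornerX.
have sI1 : is_subfield I1 by apply: sf_img; apply: is_subfieldT.
have sI2 : is_subfield I2 by apply: sf_img; apply: is_subfieldT.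
have eI1 : logn p #|I1| = d1 by rewrite card_img cardsT c1 pfactorK.
have eI2 : logn p #|I2| = d2 by rewrite card_img cardsT c2 pfactorK.
have I1R : I1 \subset Rset lam.
  apply/subsetP => z /imsetP[x _ ->].
  by have := mem x%:P; rewrite map_polyC hornerC.
have I2R : I2 \subset Rset lam.
  apply/subsetP => z /imsetP[y _ ->].
  have : y \in i2 @^-1: Rset lam by rewrite S2T inE.
  by rewrite inE.
have h1 := sf_sub_dvd hp cF sI1 sR I1R; have h2 := sf_sub_dvd hp cF sI2 sR I2R.
rewrite eI1 in h1; rewrite eI2 in h2.
have hl : (lcmn d1 d2 %| logn p #|Rset lam|)%N by rewrite dvdn_lcm h1 h2.
have hm := sf_dvd_m hp cF sR.
apply: full_card; rewrite (sf_cardE hp cF sR) cF; congr (p ^ _)%N.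
by apply/eqP; rewrite eqn_dvd hl hm.
Qed.

Definition Lam (lam : F) : 'cV[F]_d := \col_(j < d) lam ^+ j.
Definition phi (lam : F) (r : 'rV[F1]_d) : F := (map_mx i1 r *m Lam lam) 0 0.

Lemma phiE lam r : phi lam r = \sum_(j < d) i1 (r 0 j) * lam ^+ j.
Proof. by rewrite /phi mxE; apply: eq_bigr => j _; rewrite !mxE. Qed.

Lemma phiB lam r r' : phi lam (r - r') = phi lam r - phi lam r'.
Proof. by rewrite /phi map_mxB mulmxBl !mxE. Qed.

Lemma phi_inj b : Rset (i2 b) = setT -> injective (phi (i2 b)).
Proof.
move=> RT r r' e; apply/eqP; apply: contraT => ne.
set lam := i2 b in RT e.
set c := r - r'.
have c0 : c != 0 by rewrite subr_eq0.
pose cf (j : nat) : F1 := if @insub _ (fun j => j < d)%N 'I_d j is Some k then c 0 k else 0.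
have cfE : forall k : 'I_d, cf k = c 0 k by move=> k; rewrite /cf valK.
pose P := \poly_(j < d) cf j.
have P0 : P != 0.
  apply: contraNneq c0 => P0; apply/eqP/rowP => j; rewrite -cfE [RHS]mxE.
  by have := coef_poly d cf j; rewrite -/P P0 coef0 ltn_ord => <-.
have Pl : (map_poly i1 P).[lam] = 0.
  rewrite (horner_coef_wide (n := d)); last by rewrite size_map_poly size_poly.
  apply: (@etrans _ _ (phi lam c)); last by rewrite phiB e subrr.
  rewrite phiE; apply: eq_bigr => j _; rewrite coef_map coef_poly ltn_ord cfE //.
pose psi (w : 'rV[F1]_d.-1) : F := \sum_(j < d.-1) i1 (w 0 j) * lam ^+ j.
have sub : [set: F] \subset psi @: [set: 'rV[F1]_d.-1].
  apply/subsetP => x _; have : x \in Rset lam by rewrite RT inE.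
  rewrite inE => /pbP[Q ->].
  apply/imsetP; exists (\row_(j < d.-1) (Q %% P)`_j) => //.
  have sz : (size (map_poly i1 (Q %% P)) <= d.-1)%N.
    rewrite size_map_poly; have := ltn_modpN0 Q P0; have := size_poly d cf.
    rewrite -/P => h1 h2; rewrite -ltnS prednK ?d_gt0 //; exact: leq_trans h2 h1.
  rewrite {1}(divp_eq Q P) rmorphD rmorphM /= hornerD hornerM Pl mulr0 add0r.
  rewrite (horner_coef_wide _ sz); apply: eq_bigr => j _.
  by rewrite coef_map mxE.
have := subset_leq_card sub; rewrite cardsT.
have := leq_imset_card psi [set: 'rV[F1]_d.-1]; rewrite cardsT card_mx mul1n => h1 h2.
have := leq_trans h2 h1; rewrite cd leq_exp2l ?finNzRing_gt1 //.
by have := d_gt0; lia.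
Qed.

Lemma rowphi lam m (M : 'M[F1]_(m, d)) k : phi lam (row k M) = (map_mx i1 M *m Lam lam) k 0.
Proof. by rewrite /phi map_row -row_mul mxE. Qed.

Lemma phi_delta lam (t : 'I_d) : phi lam (delta_mx 0 t) = lam ^+ t.
Proof.
rewrite phiE (bigD1 t) //= big1 ?addr0 => [|j jt]; first by rewrite mxE !eqxx rmorph1 mul1r.
by rewrite mxE (negbTE jt) andbF rmorph0 mul0r.
Qed.

Lemma cover_U (A : 'M[F1]_n) (b : F2) (v : 'cV[F]_n) : v != 0 ->
  map_mx i1 A *m v = i2 b *: v -> Rset (i2 b) = setT ->
  exists U : {vspace 'cV[F1]_n}, \dim U = d /\ [forall u, (u \in U) ==> (A *m u \in U)].
Proof.
move=> nz Av RT; set lam := i2 b in Av RT.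
have inj : injective (phi lam) := phi_inj RT.
have [crd K1 K2] : bijective (phi lam).
  by apply: inj_card_bij inj _; rewrite card_mx mul1n -cd.
have [i0 vi0] : exists i, v i 0 != 0.
  apply/existsP; move: nz; apply: contraR; rewrite negb_exists => /forallP h.
  by apply/eqP/matrixP => i j; rewrite (ord1 j) mxE; apply/eqP/negbNE/h.
set v' := (v i0 0)^-1 *: v.
have Av' : map_mx i1 A *m v' = lam *: v'.
  by rewrite /v' -scalemxAr Av !scalerA mulrC.
have v'i0 : v' i0 0 = 1 by rewrite mxE mulVf.
pose Cm : 'M[F1]_(n, d) := \matrix_(k, j) crd (v' k 0) 0 j.
pose Nm : 'M[F1]_d := \matrix_(k, j) crd (lam ^+ k.+1) 0 j.
have rowC k : row k Cm = crd (v' k 0) by apply/rowP => j; rewrite !mxE.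
have rowN (k : 'I_d) : row k Nm = crd (lam ^+ k.+1) by apply/rowP => j; rewrite !mxE.
have key1 : map_mx i1 Cm *m Lam lam = v'.
  by apply/matrixP => k j; rewrite (ord1 j) -rowphi rowC K2.
have key2 : map_mx i1 Nm *m Lam lam = lam *: Lam lam.
  by apply/matrixP => k j; rewrite (ord1 j) -rowphi rowN K2 !mxE exprS.
have key3 : A *m Cm = Cm *m Nm.
  apply/row_matrixP => k; apply: inj; rewrite !rowphi !map_mxM -!mulmxA key1 key2.
  by rewrite Av' -scalemxAr key1.
have ker : forall c : 'cV[F1]_d, Cm *m c = 0 -> c = 0.
  move=> c Cc.
  have hN : forall t, Cm *m (Nm ^+ t *m c) = 0.
    elim=> [|t IH]; first by rewrite expr0 mul1mx.
    by rewrite exprS -mulmxA mulmxA -key3 -mulmxA IH mulmx0.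
  have d0 := d_gt0.
  pose t0 : 'I_d := Ordinal d0.
  have r0 : row i0 Cm = delta_mx 0 t0.
    by rewrite rowC v'i0; apply: inj; rewrite K2 phi_delta expr0.
  have hdelta : forall t (ht : (t < d)%N), row i0 Cm *m Nm ^+ t = delta_mx 0 (Ordinal ht).
    elim=> [|t IH] ht; first by rewrite expr0 mulmx1 r0; congr delta_mx; apply: val_inj.
    have ht' : (t < d)%N by apply: ltnW.
    rewrite exprSr mulmxA (IH ht') -rowE rowN; apply: inj; rewrite K2 phi_delta //.
  apply/matrixP => t j; rewrite (ord1 j) mxE.
  have hd := hdelta t (ltn_ord t).
  have eo : Ordinal (ltn_ord t) = t by apply: val_inj.
  rewrite eo in hd.
  have e1 : row t c = 0 by rewrite rowE -hd -mulmxA -row_mul hN row0.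
  by move: e1 => /rowP/(_ 0); rewrite !mxE.
pose f := linfun (mulmx Cm : 'cV[F1]_d -> 'cV[F1]_n).
have fE : forall x, f x = Cm *m x by move=> x; rewrite lfunE.
exists (limg f); split.
  have := limg_ker_dim f fullv.
  have -> : lker f = 0%VS.
    apply/eqP/lker0P => x y; rewrite !fE => e; apply/eqP; rewrite -subr_eq0.
    by apply/eqP/ker; rewrite mulmxBr e subrr.
  rewrite capv0 dimv0 add0n dimvf => ->.
  by rewrite dim_matrix; exact: muln1.
apply/forallP => u; apply/implyP => /memv_imgP[x _ ->].
rewrite fE mulmxA key3 -mulmxA -fE; exact: memv_img (memvf _).
Qed.

End Cover.
Section Main.
Variable n : nat.

Lemma commute_eq (A : 'M[F1]_n) (b : F2) (v : 'cV[F]_n) :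
  (A, b) \in CS i1 i2 v -> map_mx i1 A *m v = i2 b *: v.
Proof.
rewrite inE /Sembed /Jembed /= !mulmx_block => /eqP /eq_block_mx [_ h _ _].
by move: h; rewrite !mul0mx addr0 add0r mul_mx_scalar.
Qed.

Lemma TU_neq_MK (U : {vspace 'cV[F1]_n}) (K : {set F2}) :
  (0 < \dim U)%N -> (\dim U < n)%N -> 1 \in K -> TU F2 U != MK F1 n K.
Proof.
move=> d0 dn K1; apply/eqP => e.
have [u uU u0] : exists2 u, u \in U & u != 0.
  exists (vpick U); rewrite ?memv_pick // vpick0.
  by apply: contraTneq d0 => ->; rewrite dimv0.
have [w wU] : exists w, w \notin U.
  apply/existsP; apply: contraLR dn; rewrite negb_exists => /forallP h.
  have : (fullv <= U)%VS by apply/subvP => x _; have := h x; rewrite negbK.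
  move=> sub; rewrite -leqNgt; have := dimvS sub; rewrite dimvf.
  by rewrite dim_matrix; rewrite (_ : (n * 1)%R = n) //; exact: muln1.
have [f fu] := dual_exists u0.
have : (w *m f, 1) \in MK F1 n K by rewrite inE.
rewrite -e inE => /forallP/(_ u); rewrite uU /= -mulmxA fu mulmx1.
by rewrite (negbTE wU).
Qed.

Lemma MK_inj (K K' : {set F2}) : MK F1 n K = MK F1 n K' -> K = K'.
Proof.
move=> e; apply/setP => y.
by move/setP/(_ ((0 : 'M[F1]_n), y)): e; rewrite !inE.
Qed.

Lemma main_sec : (d < n)%N ->
  (\bigcup_(v : 'cV[F]_n | v != 0) CS i1 i2 v
     \subset \bigcup_(M in Cset i1 i2 n d) M) /\
  #|Cset i1 i2 n d| = (qbinom #|F1| n d + omega d)%N.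
Proof.
move=> dn; split.
  apply/subsetP => [[A b]] /bigcupP[v nz sCS].
  have Av := commute_eq sCS.
  case: (pbP (exists2 K, maximal_subfield K && contains_int i1 i2 K & b \in K)) => [[K Kms bK]|nb].
    apply/bigcupP; exists (MK F1 n K); last by rewrite inE.
    by rewrite inE; apply/pbP; right; exists K.
  have [U [dU inv]] := cover_U nz Av (Rset_full nb).
  apply/bigcupP; exists (TU F2 U); last by rewrite inE.
  by rewrite inE; apply/pbP; left; exists U.
set MS := [set K : {set F2} | maximal_subfield K && contains_int i1 i2 K].
set T1 := [set M : {set 'M[F1]_n * F2} |
      pb (exists U : {vspace 'cV[F1]_n}, \dim U = d /\ M = TU F2 U)].
have -> : Cset i1 i2 n d = T1 :|: [set MK F1 n K | K in MS].
  apply/setP => M; rewrite !inE; apply/pbP/orP; rewrite /inC.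
    case=> [h|[K [hK ->]]]; first by left; apply/pbP.
    by right; apply/imsetP; exists K; rewrite ?inE.
  case=> [/pbP h|/imsetP[K hK ->]]; first by left.
  by right; exists K; rewrite inE in hK.
rewrite cardsU (@card_TUpart F1 F2 n d d_gt0) card_imset; last exact: MK_inj.
rewrite card_ms.
suff -> : T1 :&: [set MK F1 n K | K in MS] = set0 by rewrite cards0 subn0.
apply/setP => M; rewrite !inE; apply/negP => /andP[/pbP[U [dU ->]] /imsetP[K]].
rewrite inE => /andP[/and3P[sK _ _] _] e.
by move: e; apply/eqP; apply: TU_neq_MK; rewrite ?dU ?d_gt0 ?sf1.
Qed.
End Main.
End Setting.

Unset Implicit Arguments.

Theorem proposition4p4 (p n d1 d2 d : nat) (F1 F2 F : finFieldType)
  (i1 : {rmorphism F1 -> F}) (i2 : {rmorphism F2 -> F}) :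
  prime p -> (3 <= n)%N ->
  #|F1| = (p ^ d1)%N -> #|F2| = (p ^ d2)%N -> #|F| = (p ^ lcmn d1 d2)%N ->
  #|F| = (#|F1| ^ d)%N ->
  (d < n - n %/ pdiv n)%N ->
  (\bigcup_(v : 'cV[F]_n | v != 0) CS i1 i2 v
     \subset \bigcup_(M in Cset i1 i2 n d) M) /\
  #|Cset i1 i2 n d| = (qbinom #|F1| n d + omega d)%N.
Proof.
move=> hp n3 c1 c2 cF cd hd.
apply: (main_sec i1 i2 hp c1 c2 cF cd).
by apply: leq_trans hd (leq_subr _ _).
Qed.
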